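(* Let $H=(V,E,C,\ell)$ be an edge-colored hypergraph of rank $r\ge 3$ with weights $w_e\ge 0$, let $x$ be any feasible solution of the \textsc{MinECC} LP relaxation with $x_e=\max_{v\in e}x_v^{\ell(e)}$ for every $e$, and let $Y$ be the output of GenColorRound applied to $x$ with interval $I=(\frac12,\frac23)$. Then for every edge $e\in E$, $\Pr[e\in\mathcal M_Y]\le 2\left(1-\frac{1}{r+1}\right)x_e$. Consequently, if $x$ is an optimal LP solution, the expected \textsc{MinECC} cost of $Y$ is at most $2\left(1-\frac{1}{r+1}\right)$ times the optimal \textsc{MinECC} value.
   Context: An edge-colored hypergraph is $H=(V,E,C,\ell)$ with node set $V$, a multiset $E$ of nonempty subsets of $V$, colors $C=[k]$, $\ell\colon E\to C$, weights $w_e\ge 0$; its rank is $r=\max_{e}|e|$. A node coloring $Y\colon V\to C$ makes a mistake at $e$ ($e\in\mathcal M_Y$) if some $v\in e$ has $Y[v]\ne\ell(e)$; \textsc{MinECC} minimizes $\sum_e w_e\mathbb 1[e\in\mathcal M_Y]$. The \textsc{MinECC} LP relaxation: minimize $\sum_e w_e x_e$ subject to $\sum_{i=1}^k x_v^i=k-1$ for all $v\in V$; $x_e\ge x_v^{\ell(e)}$ for all $e\in E$, $v\in e$; $0\le x_v^i\le1$; $0\le x_e\le 1$. GenColorRound with interval $I\subseteq[0,1]$, applied to a feasible LP solution $x$: draw $\rho$ uniformly at random from $I$ and, independently, a uniformly random permutation $\pi$ of $[k]$; let $S_i=\{v\in V: x_v^i<\rho\}$ (color $i$ wants $v$ if $x_v^i<\rho$);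 for each $v\in\bigcup_i S_i$ set $Y[v]=\pi(j)$ where $j$ is the largest index with $v\in S_{\pi(j)}$; nodes in no $S_i$ receive an arbitrary color. *)

(* Defs.v *)
From HB Require Import structures.
From mathcomp Require Import all_boot all_order all_algebra all_fingroup.
From mathcomp Require Import all_classical all_reals all_analysis.
Set Implicit Arguments. Unset Strict Implicit. Unset Printing Implicit Defensive.
Import Order.TTheory GRing.Theory Num.Theory.
Local Open Scope classical_set_scope.
Local Open Scope ring_scope.

(* An edge-colored hypergraph: nodes V (finite), edges indexed by a finite
   type E (so E is a multiset of node sets), colors 'I_k, edge map edge,
   edge coloring ell. *)

Definition rank (V E : finType) (edge : E -> {set V}) : nat :=
  \max_(e : E) #|edge e|.

Definition mistake (V E : finType) (k : nat) (edge : E -> {set V})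
  (ell : E -> 'I_k) (Y : V -> 'I_k) (e : E) : bool :=
  [exists v in edge e, Y v != ell e].

Definition ecc_cost (R : realType) (V E : finType) (k : nat)
  (edge : E -> {set V}) (ell : E -> 'I_k) (w : E -> R) (Y : V -> 'I_k) : R :=
  \sum_(e : E) w e * (mistake edge ell Y e)%:R.

Definition lp_feasible (R : realType) (V E : finType) (k : nat)
  (edge : E -> {set V}) (ell : E -> 'I_k)
  (xv : V -> 'I_k -> R) (xe : E -> R) : Prop :=
  (forall v, \sum_(i < k) xv v i = (k%:R - 1)) /\
  (forall e v, v \in edge e -> xv v (ell e) <= xe e) /\
  (forall v i, 0 <= xv v i <= 1) /\
  (forall e, 0 <= xe e <= 1).

Definition lp_obj (R : realType) (E : finType) (w : E -> R) (xe : E -> R) : R :=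
  \sum_(e : E) w e * xe e.

Definition lp_optimal (R : realType) (V E : finType) (k : nat)
  (edge : E -> {set V}) (ell : E -> 'I_k) (w : E -> R)
  (xv : V -> 'I_k -> R) (xe : E -> R) : Prop :=
  lp_feasible edge ell xv xe /\
  forall xv' xe', lp_feasible edge ell xv' xe' -> lp_obj w xe <= lp_obj w xe'.

(* Color i "wants" v iff xv v i < rho; v gets pi j for the largest index j
   with v in S_(pi j); nodes wanted by no color get the arbitrary color
   dflt v (which may depend on pi). *)
Definition gen_color_round (R : realType) (V : finType) (k : nat)
  (xv : V -> 'I_k -> R) (dflt : V -> 'I_k) (rho : R) (pi : {perm 'I_k})
  (v : V) : 'I_k :=
  match [pick j : 'I_k | (xv v (pi j) < rho) &&
           [forall j' : 'I_k, (xv v (pi j') < rho) ==> (j' <= j)%N]] with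
  | Some j => pi j
  | None => dflt v
  end.

(* Pr[e in M_Y] for rho uniform on I = ]a, b[ (density 1/(b-a) w.r.t.
   Lebesgue measure) and pi uniform on the k! permutations, independent. *)
Definition prob_mistake (R : realType) (V E : finType) (k : nat)
  (edge : E -> {set V}) (ell : E -> 'I_k) (xv : V -> 'I_k -> R)
  (dflt : {perm 'I_k} -> V -> 'I_k) (a b : R) (e : E) : \bar R :=
  ((k`!%:R)^-1)%:E *
  \sum_(pi : {perm 'I_k})
     (((b - a)^-1)%:E *
      (@lebesgue_measure R)
        ([set rho : R | (a < rho < b)%R] `&`
         [set rho | mistake edge ell (gen_color_round xv (dflt pi) rho pi) e]))%E.

Definition expected_cost (R : realType) (V E : finType) (k : nat)
  (edge : E -> {set V}) (ell : E -> 'I_k) (w : E -> R) (xv : V -> 'I_k -> R)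
  (dflt : {perm 'I_k} -> V -> 'I_k) (a b : R) : \bar R :=
  ((k`!%:R)^-1)%:E *
  \sum_(pi : {perm 'I_k})
     (((b - a)^-1)%:E *
      \int[@lebesgue_measure R]_(rho in [set rho : R | (a < rho < b)%R])
         (ecc_cost edge ell w (gen_color_round xv (dflt pi) rho pi))%:E)%E.

(* Main.v *)
Require Import Defs.
From HB Require Import structures.
From mathcomp Require Import all_boot all_order all_algebra all_fingroup.
From mathcomp Require Import all_classical all_reals all_analysis.
From mathcomp Require Import ring lra zify measurable_realfun.
Import Order.TTheory GRing.Theory Num.Theory.
Set Implicit Arguments. Unset Strict Implicit. Unset Printing Implicit Defensive.
Local Open Scope classical_set_scope.
Local Open Scope ring_scope.
Lemma meas_ray (R : realType) (c : R) (b : bool) :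
  measurable [set rho : R | (c < rho) = b].
Proof.
case: b.
  rewrite (_ : [set rho | _] = `]c, +oo[%classic); first exact: measurable_itv.
  by apply/seteqP; split => x /=; rewrite in_itv /= andbT.
rewrite (_ : [set rho | _] = `]-oo, c]%classic); first exact: measurable_itv.
by apply/seteqP; split => x /=; rewrite in_itv /= -?leNgt -?ltNge //;
  [move/negbT; rewrite -leNgt | move=> h; apply/negbTE; rewrite -leNgt].
Qed.

Lemma meas_pattern (R : realType) (T : finType) (c : T -> R)
  (F : {ffun T -> bool} -> bool) :
  measurable [set rho : R | F [ffun p => c p < rho]].
Proof.
rewrite (_ : [set rho | _] = \big[setU/set0]_(b <- enum {ffun T -> bool} | F b)
   \big[setI/setT]_(p <- enum T) [set rho : R | (c p < rho) = b p]).
  apply: bigsetU_measurable => b _; apply: bigsetI_measurable => p _.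
  exact: meas_ray.
rewrite -bigcup_seq_cond; apply/seteqP; split => rho /=.
  move=> Fr; exists [ffun p => c p < rho]; first by rewrite /= mem_enum.
  by rewrite -bigcap_seq => p _ /=; rewrite ffunE.
case=> b /= /andP[_ Fb]; rewrite -bigcap_seq => H.
suff -> : [ffun p => c p < rho] = b by [].
by apply/ffunP => p; rewrite ffunE; apply: (H p); rewrite /= mem_enum.
Qed.

Definition posP (k : nat) (S : {set 'I_k}) (s : 'I_k) : {set {perm 'I_k}} :=
  [set pi : {perm 'I_k} | [forall t in S, ((pi^-1)%g t <= (pi^-1)%g s)%N]].

Lemma posP_le (k : nat) (S : {set 'I_k}) (s c : 'I_k) :
  s \in S -> c \in S -> (#|posP S s| <= #|posP S c|)%N.
Proof.
move=> sS cS.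
rewrite -(card_imset _ (mulIg (tperm s c))).
apply: subset_leq_card; apply/fintype.subsetP => _ /imsetP[pi piP ->].
rewrite !inE in piP *; apply/forallP => t; apply/implyP => tS.
rewrite !invMg !permM tpermV tpermR.
apply: (implyP (forallP piP (tperm s c t))).
by case: tpermP.
Qed.

Lemma posP_count (k : nat) (S : {set 'I_k}) (c : 'I_k) :
  c \in S -> (k`! <= #|S| * #|posP S c|)%N.
Proof.
move=> cS.
have -> : k`! = (\sum_(pi : {perm 'I_k}) 1)%N.
  by rewrite sum1_card -card_Sn; apply: eq_card => x; rewrite !inE.
apply: (@leq_trans (\sum_(s in S) #|posP S s|)).
  rewrite (eq_bigr (fun s => \sum_(pi : {perm 'I_k}) (pi \in posP S s : nat))); last first.
    by move=> s _; rewrite -sum1_card big_mkcond.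
  rewrite exchange_big /=; apply: leq_sum => pi _.
  have [s0 s0S s0max] : exists2 s0, s0 \in S & forall t, t \in S -> ((pi^-1)%g t <= (pi^-1)%g s0)%N.
    have S0 : (0 < #|S|)%N by apply/card_gt0P; exists c.
    have [i iS Hi] := @eq_bigmax_cond _ (mem S) (fun t => nat_of_ord ((pi^-1)%g t)) S0.
    by exists i => // t tS; rewrite -Hi; apply: leq_bigmax_cond.
  rewrite (bigD1 s0) //= ; suff -> : pi \in posP S s0 by [].
  rewrite inE; apply/forallP => t; apply/implyP => tS; exact: s0max.
rewrite -sum_nat_const; apply: leq_sum => s sS; exact: posP_le.
Qed.

Definition gcr_b (V : finType) (k : nat) (W : V -> 'I_k -> bool) (d : V -> 'I_k)
  (pi : {perm 'I_k}) (v : V) : 'I_k :=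
  match [pick j : 'I_k | W v (pi j) &&
           [forall j' : 'I_k, W v (pi j') ==> (j' <= j)%N]] with
  | Some j => pi j
  | None => d v
  end.

Lemma gcrE (R : realType) (V : finType) (k : nat) (xv : V -> 'I_k -> R) d rho pi v :
  gen_color_round xv d rho pi v = gcr_b (fun v i => xv v i < rho) d pi v.
Proof. by []. Qed.

Lemma no_mistake (V : finType) (k : nat) (W : V -> 'I_k -> bool) d pi
  (S : {set 'I_k}) (c : 'I_k) v :
  W v c -> (forall i, W v i -> i \in S) -> pi \in posP S c -> gcr_b W d pi v = c.
Proof.
move=> Wc WS; rewrite inE => /forallP Hp.
set j := (pi^-1)%g c.
have pj : pi j = c by rewrite /j permKV.
have Pj : W v (pi j) && [forall j' : 'I_k, W v (pi j') ==> (j' <= j)%N].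
  rewrite pj Wc /=; apply/forallP => j'; apply/implyP => Wj'.
  have := implyP (Hp (pi j')) (WS _ Wj'); by rewrite permK.
rewrite /gcr_b; case: pickP => [j0 /andP[W0 /forallP H0]|/(_ j)]; last by rewrite Pj.
move/andP: Pj => [_ /forallP Hj].
have e0 : j0 = j.
  apply/val_inj/anti_leq; rewrite (implyP (Hj j0) W0).
  by rewrite (implyP (H0 j)) // pj.
by rewrite e0.
Qed.

Lemma count_core (V : finType) (k : nat) (ee : {set V}) (c : 'I_k)
  (W : V -> 'I_k -> bool) (d : {perm 'I_k} -> V -> 'I_k) (S : {set 'I_k})
  (M : {set {perm 'I_k}}) :
  (forall v, v \in ee -> W v c) -> (forall v i, v \in ee -> W v i -> i \in S) ->
  (forall pi, pi \in M -> [exists v in ee, gcr_b W (d pi) pi v != c]) ->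
  (#|M| + #|posP S c| <= k`!)%N.
Proof.
move=> Wc WS HM.
have -> : k`! = (#|posP S c| + #|~: posP S c|)%N by rewrite (cardsC (posP S c)) -card_Sn; apply: eq_card => x; rewrite !inE.
rewrite addnC leq_add2l; apply: subset_leq_card; apply/fintype.subsetP => pi.
move/HM; rewrite inE => /existsP[v /andP[ve]]; apply: contraNN => Pp.
by rewrite (@no_mistake _ _ W (d pi) pi S c v (Wc v ve) (fun i => WS v i ve)) // inE.
Qed.

Lemma three_le (R : realType) (k : nat) (a : 'I_k -> R) (c i j : 'I_k) :
  (forall l, 0 <= a l) -> i != c -> j != c -> j != i ->
  a c + a i + a j <= \sum_l a l.
Proof.
move=> a0 ic jc ji.
rewrite (bigD1 c) //= (bigD1 i) //= (bigD1 j) /=; last by rewrite ji jc.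
rewrite !addrA lerDl; apply: sumr_ge0 => *; exact: a0.
Qed.

Lemma K_card (R : realType) (V : finType) (k : nat) (xv : V -> 'I_k -> R)
  (ee : {set V}) (c : 'I_k) (rho : R) :
  (forall v, \sum_(i < k) xv v i = k%:R - 1) -> (forall v i, 0 <= xv v i <= 1) ->
  rho < 2/3 -> (forall v, v \in ee -> xv v c < rho) ->
  forall K : {set 'I_k}, (forall i, i \in K -> (i != c) && [exists v in ee, (xv v i < rho)%R]) ->
  (#|K| <= #|ee|)%N.
Proof.
move=> hs hb r23 hc K HK.
pose f v := odflt c [pick i | (i != c) && (xv v i < rho)%R].
apply: (leq_trans _ (leq_imset_card f ee)); apply: subset_leq_card.
apply/fintype.subsetP => i /HK /andP[ic /existsP[v /andP[ve vi]]].
apply/imsetP; exists v => //; rewrite /f; case: pickP => [j /andP[jc vj]|/(_ i)]; last by rewrite ic vi.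
apply/eqP; apply: contraT => /= ij; exfalso.
have ji : j != i by rewrite eq_sym.
have := three_le (a := fun l => 1 - xv v l) _ ic jc ji.
have -> : \sum_l (1 - xv v l) = 1.
  by rewrite sumrB hs sumr_const card_ord opprB addrC subrK.
have a0 : forall l, 0 <= 1 - xv v l by move=> l; rewrite subr_ge0; case/andP: (hb v l).
move=> /(_ a0) /=.
have := hc v ve.
lra.
Qed.

Lemma two_le (R : realType) (k : nat) (a : 'I_k -> R) (c i : 'I_k) :
  (forall l, 0 <= a l) -> i != c -> a c + a i <= \sum_l a l.
Proof.
move=> a0 ic.
rewrite (bigD1 c) //= (bigD1 i) //=.
rewrite !addrA lerDl; apply: sumr_ge0 => *; exact: a0.
Qed.

Lemma sum1m (R : realType) (k : nat) (a : 'I_k -> R) :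
  \sum_(i < k) a i = k%:R - 1 -> \sum_l (1 - a l) = 1.
Proof. by move=> hs; rewrite sumrB hs sumr_const card_ord opprB addrC subrK. Qed.

Section Count.
Variables (R : realType) (V E : finType) (k : nat) (edge : E -> {set V})
  (ell : E -> 'I_k) (xv : V -> 'I_k -> R) (xe : E -> R)
  (dflt : {perm 'I_k} -> V -> 'I_k).
Hypothesis hs : forall v, \sum_(i < k) xv v i = k%:R - 1.
Hypothesis hxe : forall e v, v \in edge e -> xv v (ell e) <= xe e.
Hypothesis hb : forall v i, 0 <= xv v i <= 1.

Definition Mset (e : E) (rho : R) : {set {perm 'I_k}} :=
  [set pi | mistake edge ell (gen_color_round xv (dflt pi) rho pi) e].

Lemma MsetE e rho : Mset e rho =
  [set pi | [exists v in edge e, gcr_b (fun v i => (xv v i < rho)%R) (dflt pi) pi v != ell e]]%SET.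
Proof. by apply/setP => pi; rewrite !inE /mistake; apply: eq_existsb => v; rewrite gcrE. Qed.

Lemma count_a e rho : xe e < rho -> rho < 2/3 ->
  ((rank edge).+1 * #|Mset e rho| <= rank edge * k`!)%N.
Proof.
move=> xr r23.
set c := ell e.
set K := [set i | (i != c) && [exists v in edge e, (xv v i < rho)%R]]%SET.
set S := (c |: K)%SET.
have Wc : forall v, v \in edge e -> (xv v c < rho)%R.
  by move=> v ve; apply: le_lt_trans (hxe ve) xr.
have cS : c \in S by rewrite !inE eqxx.
have core := @count_core V k (edge e) c (fun v i => xv v i < rho) dflt S (Mset e rho) Wc.
have WS : forall v i, v \in edge e -> (xv v i < rho)%R -> i \in S.
  move=> v i ve vi; rewrite !inE; case: (i =P c) => //= _.
  by apply/existsP; exists v; rewrite ve.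
have HM : (#|Mset e rho| + #|posP S c| <= k`!)%N.
  by apply: core WS _ => pi; rewrite inE /mistake.

have HP := posP_count cS.
have HK : (#|K| <= #|edge e|)%N by apply: (K_card hs hb r23 Wc) => i; rewrite inE.
have HS : (#|S| <= (#|edge e|).+1)%N.
  by rewrite cardsU1; case: (c \in K) => /=; rewrite ?add0n ?add1n ?ltnS // ltnW.
have Hr : (#|edge e| <= rank edge)%N by rewrite /rank; exact: (@leq_bigmax _ (fun e => #|edge e|) e).
have H1 : (#|S| * #|posP S c| <= (rank edge).+1 * #|posP S c|)%N.
  by apply: leq_mul => //; apply: leq_trans HS _; rewrite ltnS.
have H2 := leq_mul (leqnn (rank edge).+1) HM.
move: H2 H1 HP; rewrite mulnDr.
move: (#|Mset e rho|) (#|posP S c|) (#|S|) (k`!) (rank edge) => m p s f r.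
rewrite !mulSn; lia.
Qed.

Lemma count_b e rho : xe e < rho -> rho <= 1 - xe e -> #|Mset e rho| = 0%N.
Proof.
move=> xr r1.
set c := ell e.
set S := [set c]%SET.
have Wc : forall v, v \in edge e -> (xv v c < rho)%R.
  by move=> v ve; apply: le_lt_trans (hxe ve) xr.
have cS : c \in S by rewrite !inE eqxx.
have core := @count_core V k (edge e) c (fun v i => xv v i < rho) dflt S (Mset e rho) Wc.
have WS : forall v i, v \in edge e -> (xv v i < rho)%R -> i \in S.
  move=> v i ve vi; rewrite !inE; apply: contraT => ic; exfalso.
  have := two_le (a := fun l => 1 - xv v l) _ ic.
  rewrite (sum1m (hs v)).
  have a0 : forall l, 0 <= 1 - xv v l by move=> l; rewrite subr_ge0; case/andP: (hb v l).
  move=> /(_ a0) /=.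
  have := hxe ve; rewrite -/c; lra.
have HM : (#|Mset e rho| + #|posP S c| <= k`!)%N.
  by apply: core WS _ => pi; rewrite inE /mistake.
have HP := posP_count cS.
rewrite cards1 mul1n in HP.
apply/eqP; rewrite -leqn0; lia.
Qed.

Lemma gcr_b_ext (W W' : V -> 'I_k -> bool) d pi v :
  (forall v i, W v i = W' v i) -> gcr_b W d pi v = gcr_b W' d pi v.
Proof.
move=> H; rewrite /gcr_b.
have -> : [pick j | W v (pi j) && [forall j', W v (pi j') ==> (j' <= j)%N]] =
          [pick j | W' v (pi j) && [forall j', W' v (pi j') ==> (j' <= j)%N]].
  by apply: eq_pick => j /=; rewrite H; congr andb; apply: eq_forallb => j'; rewrite H.
by [].
Qed.

Definition Aset (pi : {perm 'I_k}) (e : E) : set R :=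
  [set rho | mistake edge ell (gen_color_round xv (dflt pi) rho pi) e].

Lemma meas_A pi e : measurable (Aset pi e).
Proof.
have -> : Aset pi e = [set rho | (fun b : {ffun (V * 'I_k)%type -> bool} =>
    mistake edge ell (gcr_b (fun v i => b (v, i)) (dflt pi) pi) e)
    [ffun p => xv p.1 p.2 < rho]].
  have E1 : forall rho, mistake edge ell (gen_color_round xv (dflt pi) rho pi) e =
      mistake edge ell (gcr_b (fun v i => [ffun p => xv p.1 p.2 < rho] (v, i)) (dflt pi) pi) e.
    move=> rho; rewrite /mistake; apply: eq_existsb => v.
    rewrite gcrE (@gcr_b_ext _ (fun v i => [ffun p => xv p.1 p.2 < rho] (v, i))) // => v' i.
    by rewrite ffunE.
  by rewrite /Aset; apply/seteqP; split => rho /=; rewrite E1.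
exact: (@meas_pattern R _ (fun p : (V * 'I_k)%type => xv p.1 p.2) (fun b : {ffun (V * 'I_k)%type -> bool} => mistake edge ell (gcr_b (fun v i => b (v, i)) (dflt pi) pi) e)).
Qed.

Lemma card_bound_a e rho : xe e < rho -> rho < 2/3 ->
  (#|Mset e rho|%:R <= k`!%:R * (1 - ((rank edge).+1%:R)^-1) :> R).
Proof.
move=> h1 h2; have h := count_a h1 h2.
have : ((rank edge).+1%:R * #|Mset e rho|%:R <= (rank edge)%:R * k`!%:R :> R).
  by rewrite -!natrM ler_nat.
have pos : (0 : R) < (rank edge).+1%:R by rewrite ltr0n.
move: (rank edge) pos (k`!) (#|Mset e rho|) => r pos F M HM.
have Hy : (r.+1%:R : R) * (r.+1%:R)^-1 = 1 by rewrite mulfV // gt_eqF.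
have y0 : (0 : R) <= (r.+1%:R)^-1 by rewrite invr_ge0 ltW.
have := ler_wpM2r y0 HM.
rewrite -addn1 natrD in Hy *.
set y := ((r%:R + 1%:R)^-1 : R).
move: Hy; rewrite /y; move: (r%:R : R) (F%:R : R) (M%:R : R) => a b m Hy.
move=> H; move: Hy H; move: ((a + 1)^-1) => z Hy H.
have e1 : (a + 1) * m * z = m by rewrite mulrAC Hy mul1r.
have e2 : a * b * z = b * (1 - z).
  have -> : 1 - z = a * z by rewrite -{1}Hy; ring.
  ring.
by rewrite -e2 -e1.
Qed.

Local Notation lam := (@lebesgue_measure R).
Definition Iset : set R := [set rho : R | (1/2 < rho < 2/3)%R].
Definition I1 e : set R := Iset `&` [set x | x <= xe e].
Definition I2 e : set R := Iset `&` ([set x | xe e < x] `&` [set x | 1 - xe e < x]).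

Lemma meas_I : measurable Iset.
Proof.
rewrite (_ : Iset = `]1/2, 2/3[%classic); first exact: measurable_itv.
by apply/seteqP; split => x /=; rewrite in_itv.
Qed.

Lemma meas_gt (a : R) : measurable [set x : R | a < x].
Proof. exact: (meas_ray a true). Qed.

Lemma meas_le (a : R) : measurable [set x : R | x <= a].
Proof.
rewrite (_ : [set x | x <= a] = [set x | (a < x) = false]); first exact: meas_ray.
by apply/seteqP; split => x /=; rewrite ltNge; [move=> ->|move/negbFE].
Qed.

Lemma meas_I1 e : measurable (I1 e).
Proof. apply: measurableI; [exact: meas_I|exact: meas_le]. Qed.

Lemma meas_I2 e : measurable (I2 e).
Proof. apply: measurableI; [exact: meas_I|apply: measurableI; exact: meas_gt]. Qed.

Lemma MsetP e rho pi : Aset pi e rho <-> pi \in Mset e rho.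
Proof. by rewrite inE. Qed.

Lemma step1 e pi : (lam (Iset `&` Aset pi e) <= lam (I1 e) + lam (I2 e `&` Aset pi e))%E.
Proof.
have mA := meas_A pi e.
apply: le_trans (measureU2 lam (meas_I1 e) (measurableI _ _ (meas_I2 e) mA)).
apply: le_measure; rewrite ?inE; first exact: measurableI meas_I mA.
  by apply: measurableU; [exact: meas_I1|exact: measurableI (meas_I2 e) mA].
move=> x [Ix Ax].
have [xle|xgt] := leP x (xe e); first by left.
have [ygt|yle] := ltP (1 - xe e) x; first by right.
exfalso.
have := count_b xgt yle; move/eqP; rewrite cards_eq0 => /eqP M0.
have : pi \in Mset e x by apply/MsetP.
by rewrite M0 inE.
Qed.

Lemma sum_indic e x :
  (\sum_(pi : {perm 'I_k}) \1_(Aset pi e) x = #|Mset e x|%:R :> R).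
Proof.
transitivity (\sum_(pi : {perm 'I_k}) (nat_of_bool (pi \in Mset e x))%:R : R).
  apply: eq_bigr => pi _; rewrite indicE; case: (boolP (pi \in Mset e x)) => H.
    by rewrite mem_set //; apply/MsetP.
  by rewrite memNset //; move/MsetP; apply/negP.
rewrite -natr_sum; congr (_%:R).
by rewrite -sum1_card [RHS]big_mkcond.
Qed.

Lemma step2 e : (\sum_(pi : {perm 'I_k}) lam (I2 e `&` Aset pi e) <=
   (k`!%:R * (1 - ((rank edge).+1%:R)^-1))%:E * lam (I2 e))%E.
Proof.
have mI2 := meas_I2 e.
have mf : forall pi, measurable_fun (I2 e) (fun x => (\1_(Aset pi e) x : R)%:E).
  move=> pi; apply/measurable_EFinP; apply: measurable_indic; exact: meas_A.
have -> : (\sum_(pi : {perm 'I_k}) lam (I2 e `&` Aset pi e) =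
   \sum_(pi : {perm 'I_k}) \int[lam]_(x in I2 e) (\1_(Aset pi e) x : R)%:E)%E.
  apply: eq_bigr => pi _.
  by rewrite (integral_indic lam mI2 (meas_A pi e)) setIC.
rewrite -(ge0_integral_sum lam mI2 mf); last by move=> pi x _; rewrite lee_fin indicE ler0n.
rewrite -integral_cst //.
apply: ge0_le_integral => //.
- by move=> x _; apply: sume_ge0 => pi _; rewrite lee_fin indicE ler0n.
- exact: emeasurable_sum.
move=> x [/andP[_ x23] [x1 _]] /=.
rewrite sumEFin lee_fin sum_indic.
exact: card_bound_a.
Qed.

Lemma lam_sub (S : set R) (a b : R) : measurable S -> a <= b ->
  S `<=` [set x | a < x <= b] -> (lam S <= (b - a)%:E)%E.
Proof.
move=> mS ab Sab.
apply: (@le_trans _ _ (lam `]a, b]%classic)).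
  apply: le_measure.
  - by rewrite inE.
  - by rewrite inE; exact: measurable_itv.
  - by move=> x /Sab /= h; rewrite in_itv.
rewrite lebesgue_measure_itv /=.
by case: ifP => _; rewrite ?lee_fin ?subr_ge0 // -EFinD.
Qed.

Lemma lam_sub' (S : set R) (a b c : R) : measurable S -> a <= b ->
  S `<=` [set x | a < x <= b] -> b - a <= c -> (lam S <= c%:E)%E.
Proof. by move=> mS ab Sab bc; apply: le_trans (lam_sub mS ab Sab) _; rewrite lee_fin. Qed.

Lemma a_bounds e (q : R) : 3/4 <= q -> q <= 1 -> 0 <= xe e ->
  exists a1 a2 : R, [/\ 0 <= a1, 0 <= a2, (lam (I1 e) <= a1%:E)%E,
    (lam (I2 e) <= a2%:E)%E & 6 * a1 + 6 * q * a2 <= 2 * q * xe e].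
Proof.
move=> q1 q2 x0.
have m1 := meas_I1 e; have m2 := meas_I2 e.
rewrite /I1 /I2 in m1 m2 *.
move: (xe e) x0 m1 m2 => x x0 m1 m2.
have [h1|h1] := lerP x (1/3).
  exists 0, 0; split => //.
  - apply: (lam_sub' (a := 1/2) (b := 1/2) m1); [lra| |lra].
    by move=> r /= [] /andP[r1 r2] r3; exfalso; lra.
  - apply: (lam_sub' (a := 1/2) (b := 1/2) m2); [lra| |lra].
    by move=> r /= [] /andP[r1 r2] [r3 r4]; exfalso; lra.
  - nra.
have [h2|h2] := lerP x (1/2).
  exists 0, (x - 1/3); split => //; first lra.
  - apply: (lam_sub' (a := 1/2) (b := 1/2) m1); [lra| |lra].
    by move=> r /= [] /andP[r1 r2] r3; exfalso; lra.
  - apply: (lam_sub' (a := 1 - x) (b := 2/3) m2); [lra| |lra].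
    by move=> r /= [] /andP[r1 r2] [r3 r4] /=; apply/andP; split; lra.
  - nra.
have [h3|h3] := lerP x (2/3).
  exists (x - 1/2), (2/3 - x); split => //; first lra; first lra.
  - apply: (lam_sub' (a := 1/2) (b := x) m1); [lra| |lra].
    by move=> r /= [] /andP[r1 r2] r3 /=; apply/andP; split; lra.
  - apply: (lam_sub' (a := x) (b := 2/3) m2); [lra| |lra].
    by move=> r /= [] /andP[r1 r2] [r3 r4] /=; apply/andP; split; lra.
  - nra.
exists (1/6), 0; split; [lra|lra| | |].
- apply: (lam_sub' (a := 1/2) (b := 2/3) m1); [lra| |lra].
  by move=> r /= [] /andP[r1 r2] r3 /=; apply/andP; split; lra.
- apply: (lam_sub' (a := 2/3) (b := 2/3) m2); [lra| |lra].
  by move=> r /= [] /andP[r1 r2] [r3 r4]; exfalso; lra.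
- nra.
Qed.

Lemma edge_bound e : (3 <= rank edge)%N -> 0 <= xe e ->
  (prob_mistake edge ell xv dflt (1/2) (2/3) e <=
     (2 * (1 - ((rank edge).+1%:R)^-1) * xe e)%:E)%E.
Proof.
move=> r3 x0.
set q := 1 - ((rank edge).+1%:R)^-1 : R.
have [q1 q2] : 3/4 <= q /\ q <= 1.
  have hr : (4%:R : R) <= (rank edge).+1%:R by rewrite ler_nat ltnS.
  have Hy : (rank edge).+1%:R * ((rank edge).+1%:R)^-1 = 1 :> R by rewrite mulfV // pnatr_eq0.
  have y0 : (0 : R) < ((rank edge).+1%:R)^-1 by rewrite invr_gt0 ltr0n.
  rewrite /q; move: Hy y0 hr; move: ((rank edge).+1%:R^-1 : R) ((rank edge).+1%:R : R) => y z.
  move=> Hy y0 hr; split; nra.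
have [a1 [a2 [a10 a20 ha1 ha2 hfin]]] := a_bounds (e := e) q1 q2 x0.
have mI2 := meas_I2 e.
pose m pi := fine (lam (I2 e `&` Aset pi e)).
have le2 : forall pi, (lam (I2 e `&` Aset pi e) <= a2%:E)%E.
  move=> pi; apply: le_trans ha2; apply: le_measure.
  - by rewrite inE; exact: measurableI mI2 (meas_A pi e).
  - by rewrite inE.
  - by move=> y [].
have fin : forall pi, lam (I2 e `&` Aset pi e) = (m pi)%:E.
  move=> pi; rewrite /m fineK // ge0_fin_numE //.
  by apply: le_lt_trans (le2 pi) _; rewrite ltry.
have hsum : \sum_(pi : {perm 'I_k}) m pi <= k`!%:R * q * a2.
  have := step2 e.
  under eq_bigr do rewrite fin.
  rewrite sumEFin => h; rewrite -lee_fin; apply: le_trans h _.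
  rewrite [in X in (_ <= X)%E]EFinM; apply: lee_wpmul2l => //.
  by rewrite lee_fin mulr_ge0 // ?ler0n //; rewrite -/q; lra.
have hpi : forall pi, (lam (Iset `&` Aset pi e) <= (a1 + m pi)%:E)%E.
  move=> pi; apply: le_trans (step1 e pi) _; rewrite EFinD -fin; exact: leeD.
have h6 : ((2/3 - 1/2 : R)^-1) = 6.
  rewrite (_ : 2/3 - 1/2 = 6^-1 :> R); last by field.
  by rewrite invrK.
rewrite /prob_mistake h6.
apply: (@le_trans _ _ (((k`!%:R)^-1)%:E * \sum_(pi : {perm 'I_k}) ((6 * (a1 + m pi))%:E))%E).
  apply: lee_wpmul2l; first by rewrite lee_fin invr_ge0 ler0n.
  apply: lee_sum => pi _; rewrite EFinM; apply: lee_wpmul2l; first by rewrite lee_fin.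
  exact: hpi.
rewrite sumEFin -EFinM lee_fin.
rewrite -mulr_sumr big_split /= sumr_const.
have -> : #|{: {perm 'I_k}}| = k`! by rewrite -card_Sn; apply: eq_card => z; rewrite !inE.
rewrite -[a1 *+ _]mulr_natr.
have F0 : (0 : R) < k`!%:R by rewrite ltr0n fact_gt0.
have Hy : k`!%:R * (k`!%:R)^-1 = 1 :> R by rewrite mulfV // gt_eqF.
have y0 : (0 : R) <= (k`!%:R)^-1 by rewrite invr_ge0 ltW.
have h2 := ler_wpM2l y0 hsum.
move: Hy y0 h2 F0 hsum; move: (k`!%:R : R) ((k`!%:R)^-1 : R) (\sum_(pi : {perm 'I_k}) m pi) => F y S.
move=> Hy y0 h2 F0 hsum.
have e1 : y * (6 * (a1 * F + S)) = 6 * a1 * (F * y) + 6 * (y * S) by ring.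
have e2 : y * (F * q * a2) = q * a2 * (F * y) by ring.
rewrite e1; rewrite e2 Hy in h2; rewrite Hy.
lra.
Qed.

Lemma h6 : ((2/3 - 1/2 : R)^-1) = 6.
Proof. rewrite (_ : 2/3 - 1/2 = 6^-1 :> R); last by field. by rewrite invrK. Qed.

Definition L pi e := fine (lam (Iset `&` Aset pi e)).

Lemma Lfin pi e : lam (Iset `&` Aset pi e) = (L pi e)%:E.
Proof.
rewrite /L fineK // ge0_fin_numE //.
apply: (@le_lt_trans _ _ ((2/3 - 1/2)%:E)); last by rewrite ltry.
apply: (lam_sub' (a := 1/2) (b := 2/3)); [|lra| |lra].
- exact: measurableI meas_I (meas_A pi e).
- by move=> r /= [] /andP[r1 r2] _ /=; apply/andP; split => //; apply: ltW.
Qed.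

Lemma prob_eq e : prob_mistake edge ell xv dflt (1/2) (2/3) e =
  ((k`!%:R)^-1 * \sum_(pi : {perm 'I_k}) (6 * L pi e))%:E.
Proof.
rewrite /prob_mistake h6 EFinM; congr (_ * _)%E; rewrite -sumEFin.
by apply: eq_bigr => pi _; rewrite EFinM -Lfin.
Qed.

Lemma int_cost pi (w : E -> R) : (forall e, 0 <= w e) ->
  (\int[lam]_(x in Iset) (ecc_cost edge ell w (gen_color_round xv (dflt pi) x pi))%:E
   = \sum_e (w e)%:E * lam (Iset `&` Aset pi e))%E.
Proof.
move=> w0.
have mI := meas_I.
transitivity (\int[lam]_(x in Iset) (\sum_e ((w e)%:E * (\1_(Aset pi e) x : R)%:E))%E)%E.
  apply: eq_integral => x _; rewrite /ecc_cost -sumEFin; apply: eq_bigr => e _; rewrite -EFinM indicE.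
  congr (_%:E); congr (_ * _).
  case: (boolP (mistake edge ell (gen_color_round xv (dflt pi) x pi) e)) => H.
    by rewrite mem_set.
  by rewrite memNset //; move/negP: H.
have mf : forall e, measurable_fun Iset (fun x => ((w e)%:E * (\1_(Aset pi e) x : R)%:E)%E).
  move=> e; apply: emeasurable_funM; first exact: measurable_cst.
  by apply/measurable_EFinP; apply: measurable_indic; exact: meas_A.
have f0 : forall e x, Iset x -> (0 <= (w e)%:E * (\1_(Aset pi e) x : R)%:E)%E.
  by move=> e x _; apply: mule_ge0; rewrite lee_fin ?indicE ?ler0n.
rewrite (ge0_integral_sum lam mI mf f0).
apply: eq_bigr => e _.
have f10 : forall x, Iset x -> (0 <= (\1_(Aset pi e) x : R)%:E)%E.
  by move=> x _; rewrite lee_fin indicE ler0n.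
have mf1 : measurable_fun Iset (fun x => (\1_(Aset pi e) x : R)%:E).
  by apply/measurable_EFinP; apply: measurable_indic; exact: meas_A.
rewrite (ge0_integralZl_EFin lam mI f10 mf1 (w0 e)).
by rewrite (integral_indic lam mI (meas_A pi e)) setIC.
Qed.

Lemma exp_eq (w : E -> R) : (forall e, 0 <= w e) ->
  expected_cost edge ell w xv dflt (1/2) (2/3) =
  ((k`!%:R)^-1 * \sum_(pi : {perm 'I_k}) (6 * \sum_e w e * L pi e))%:E.
Proof.
move=> w0.
rewrite /expected_cost h6 EFinM; congr (_ * _)%E; rewrite -sumEFin.
apply: eq_bigr => pi _; rewrite int_cost // EFinM -sumEFin; congr (_ * _)%E.
by apply: eq_bigr => e _; rewrite EFinM -Lfin.
Qed.
End Count.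

Lemma q_ge0 (R : realType) (r : nat) : (0 : R) <= 1 - (r.+1%:R)^-1.
Proof.
rewrite subr_ge0 invf_le1 // ?ler1n // ltr0n //.
Qed.

Lemma yopt_feasible (R : realType) (V E : finType) (k : nat)
  (edge : E -> {set V}) (ell : E -> 'I_k) (Y : V -> 'I_k) :
  lp_feasible edge ell (fun v i => ((Y v != i) : nat)%:R : R)
    (fun e => ((mistake edge ell Y e) : nat)%:R).
Proof.
split; [|split; [|split]].
- move=> v.
  transitivity (\sum_(i < k) (1 - ((Y v == i) : nat)%:R) : R).
    by apply: eq_bigr => i _; case: (Y v =P i) => _ /=; rewrite ?subrr ?subr0.
  rewrite sumrB sumr_const card_ord (bigD1 (Y v)) //= eqxx big1 ?addr0 //.
  by move=> i; rewrite eq_sym => /negbTE ->.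
- move=> e v ve.
  case: (boolP (Y v != ell e)) => H /=.
    suff -> : mistake edge ell Y e by [].
    by apply/existsP; exists v; rewrite ve.
  by case: (mistake _ _ _ _).
- by move=> v i; case: (Y v != i) => /=; rewrite ?lexx ?ler01.
- by move=> e; case: (mistake _ _ _ _) => /=; rewrite ?lexx ?ler01.
Qed.

Close Scope classical_set_scope.

Theorem theorem3 (R : realType) (V E : finType) (k : nat)
  (edge : E -> {set V}) (ell : E -> 'I_k) (w : E -> R)
  (xv : V -> 'I_k -> R) (xe : E -> R)
  (dflt : {perm 'I_k} -> V -> 'I_k) :
  (forall e, edge e != finset.set0) ->
  (3 <= rank edge)%N ->
  (forall e, 0 <= w e) ->
  lp_feasible edge ell xv xe ->
  (forall e, xe e = \big[Num.max/0]_(v in edge e) xv v (ell e)) ->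
  (forall e, (prob_mistake edge ell xv dflt (1/2) (2/3) e <=
              (2 * (1 - ((rank edge).+1%:R)^-1) * xe e)%:E)%E) /\
  (lp_optimal edge ell w xv xe ->
   forall Yopt : V -> 'I_k,
   (expected_cost edge ell w xv dflt (1/2) (2/3) <=
    (2 * (1 - ((rank edge).+1%:R)^-1) * ecc_cost edge ell w Yopt)%:E)%E).
Proof.
move=> _ r3 w0 [hs [hxe [hb hx01]]] _.
have EB : forall e, (prob_mistake edge ell xv dflt (1/2) (2/3) e <=
              (2 * (1 - ((rank edge).+1%:R)^-1) * xe e)%:E)%E.
  by move=> e; apply: edge_bound => //; case/andP: (hx01 e).
split => //.
move=> [_ hopt] Yopt.
rewrite exp_eq // lee_fin.
set q := 1 - ((rank edge).+1%:R)^-1 : R.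
set c := (k`!%:R)^-1 : R.
set Lf := L edge ell xv dflt.
have PE : forall e, c * \sum_(pi : {perm 'I_k}) (6 * Lf pi e) <= 2 * q * xe e.
  by move=> e; have := EB e; rewrite prob_eq lee_fin.
have -> : c * \sum_(pi : {perm 'I_k}) (6 * \sum_e w e * Lf pi e) =
          \sum_e w e * (c * \sum_(pi : {perm 'I_k}) (6 * Lf pi e)).
  transitivity (\sum_(pi : {perm 'I_k}) \sum_e c * (6 * (w e * Lf pi e))).
    rewrite mulr_sumr; apply: eq_bigr => pi _; rewrite mulr_sumr mulr_sumr.
    by apply: eq_bigr => e _.
  rewrite exchange_big /=; apply: eq_bigr => e _.
  rewrite mulr_sumr mulr_sumr; apply: eq_bigr => pi _; ring.
apply: (@le_trans _ _ (\sum_e w e * (2 * q * xe e))).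
  by apply: ler_sum => e _; apply: ler_wpM2l.
have -> : \sum_e w e * (2 * q * xe e) = 2 * q * lp_obj w xe.
  by rewrite /lp_obj mulr_sumr; apply: eq_bigr => e _; ring.
have h := hopt _ _ (@yopt_feasible R _ _ _ edge ell Yopt).
apply: ler_wpM2l; first by apply: mulr_ge0 => //; apply: q_ge0.
exact: h.
Qed.
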